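(* Let $(V,g)$ be a real vector space of dimension $n\ge3$ with non-degenerate scalar product $g$. Let $R\in\mathfrak{r}(V)$ be orthogonal to $\mathfrak{a}(V)\oplus\mathfrak{s}(V)$ and suppose $Ric(R)\neq0$. Then $Ric(R)$ is skew-symmetric and $3\,Ric(R)=Ric^*(R)$.
   Context: $\mathfrak{r}(V)$ is the space of $(0,4)$-tensors $R$ with $R(x,y,z,w)=-R(y,x,z,w)$ and $R(x,y,z,w)+R(y,z,x,w)+R(z,x,y,w)=0$; $\mathfrak{a}(V)$, resp. $\mathfrak{s}(V)$, is the subspace of those $R\in\mathfrak{r}(V)$ that are skew-symmetric, resp. symmetric, in the last two arguments. Orthogonality is with respect to the inner product on $(0,4)$-tensors induced by $g$, $\langle R,S\rangle=g^{ia}g^{jb}g^{kc}g^{ld}R_{ijkl}S_{abcd}$. $R^*(x,y,z,w):=-R(x,y,w,z)$, $Ric(R)(x,y):=g^{ij}R(e_i,x,y,e_j)$, $Ric^*(R):=Ric(R^* )$, where $(g^{ij})$ is the inverse of $g_{ij}=g(e_i,e_j)$ for a basis $\{e_i\}$. *)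

(* Defs.v *)
From HB Require Import structures.
From mathcomp Require Import all_boot all_order all_algebra.
From mathcomp Require Import reals.
Set Implicit Arguments. Unset Strict Implicit. Unset Printing Implicit Defensive.
Import Order.TTheory GRing.Theory Num.Theory.
Local Open Scope ring_scope.

(* V = R^n with standard basis e_i; a (0,4)-tensor is given by its components
   T i j k l = T(e_i,e_j,e_k,e_l); a (0,2)-tensor by its components. *)
Definition tensor4 (R : Type) (n : nat) := 'I_n -> 'I_n -> 'I_n -> 'I_n -> R.
Definition tensor2 (R : Type) (n : nat) := 'I_n -> 'I_n -> R.

Section Defs.
Variables (R : realType) (n : nat).

Definition nondeg_scalar_product (g : 'M[R]_n) : Prop :=
  g^T = g /\ g \in unitmx.

Definition in_r (T : tensor4 R n) : Prop :=
  (forall x y z w, T x y z w = - T y x z w) /\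
  (forall x y z w, T x y z w + T y z x w + T z x y w = 0).

Definition in_a (T : tensor4 R n) : Prop :=
  in_r T /\ forall x y z w, T x y z w = - T x y w z.

Definition in_s (T : tensor4 R n) : Prop :=
  in_r T /\ forall x y z w, T x y z w = T x y w z.

Definition tinner (g : 'M[R]_n) (T S : tensor4 R n) : R :=
  let gi := invmx g in
  \sum_(i < n) \sum_(j < n) \sum_(k < n) \sum_(l < n)
  \sum_(a < n) \sum_(b < n) \sum_(c < n) \sum_(d < n)
    gi i a * gi j b * gi k c * gi l d * T i j k l * S a b c d.

Definition orth_a_plus_s (g : 'M[R]_n) (T : tensor4 R n) : Prop :=
  forall A S : tensor4 R n, in_a A -> in_s S ->
    tinner g T (fun x y z w => A x y z w + S x y z w) = 0.

Definition tstar (T : tensor4 R n) : tensor4 R n :=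
  fun x y z w => - T x y w z.

Definition Ric (g : 'M[R]_n) (T : tensor4 R n) : tensor2 R n :=
  fun x y => \sum_(i < n) \sum_(j < n) invmx g i j * T i x y j.

Definition Ricstar (g : 'M[R]_n) (T : tensor4 R n) : tensor2 R n :=
  Ric g (tstar T).

End Defs.

(* Main.v *)
Require Import Defs.
From HB Require Import structures.
From mathcomp Require Import all_boot all_order all_algebra.
From mathcomp Require Import reals.
From mathcomp Require Import ring lra.
From Stdlib Require Import FunctionalExtensionality.
Import Order.TTheory GRing.Theory Num.Theory.
Local Open Scope ring_scope.

Lemma rot3 {R : realType} {n : nat} (F : 'I_n -> 'I_n -> 'I_n -> R) :
  \sum_(p < n) \sum_(q < n) \sum_(r < n) F p q r =
  \sum_(i < n) \sum_(j < n) \sum_(k < n) F j k i.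
Proof. rewrite [RHS]exchange_big /=; apply eq_bigr => j _; by rewrite exchange_big. Qed.

Definition op1 {R : realType} {n : nat} (M : 'M[R]_n) (X : tensor4 R n) : tensor4 R n :=
  fun a b c d => \sum_(i < n) M a i * X i b c d.
Definition op2 {R : realType} {n : nat} (M : 'M[R]_n) (X : tensor4 R n) : tensor4 R n :=
  fun a b c d => \sum_(i < n) M b i * X a i c d.
Definition op3 {R : realType} {n : nat} (M : 'M[R]_n) (X : tensor4 R n) : tensor4 R n :=
  fun a b c d => \sum_(i < n) M c i * X a b i d.
Definition op4 {R : realType} {n : nat} (M : 'M[R]_n) (X : tensor4 R n) : tensor4 R n :=
  fun a b c d => \sum_(i < n) M d i * X a b c i.

Ltac fext := do 4 (apply: functional_extensionality => ?).

Ltac comm_tac := fext; rewrite /op1 /op2 /op3 /op4;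
  under eq_bigr do rewrite big_distrr; rewrite exchange_big;
  apply eq_bigr => ? _; rewrite big_distrr; apply eq_bigr => ? _ /=; ring.

Section S.
Context {R : realType} {n : nat}.
Implicit Types (M N : 'M[R]_n) (X : tensor4 R n).
Lemma c21 M N X : op2 M (op1 N X) = op1 N (op2 M X). Proof. comm_tac. Qed.
Lemma c31 M N X : op3 M (op1 N X) = op1 N (op3 M X). Proof. comm_tac. Qed.
Lemma c41 M N X : op4 M (op1 N X) = op1 N (op4 M X). Proof. comm_tac. Qed.
Lemma c32 M N X : op3 M (op2 N X) = op2 N (op3 M X). Proof. comm_tac. Qed.
Lemma c42 M N X : op4 M (op2 N X) = op2 N (op4 M X). Proof. comm_tac. Qed.
Lemma c43 M N X : op4 M (op3 N X) = op3 N (op4 M X). Proof. comm_tac. Qed.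

Ltac merge_tac := fext; rewrite /op1 /op2 /op3 /op4;
  under eq_bigr do rewrite big_distrr; rewrite exchange_big;
  apply eq_bigr => ? _; rewrite mxE big_distrl; apply eq_bigr => ? _ /=; ring.
Lemma m1 M N X : op1 M (op1 N X) = op1 (M *m N) X. Proof. merge_tac. Qed.
Lemma m2 M N X : op2 M (op2 N X) = op2 (M *m N) X. Proof. merge_tac. Qed.
Lemma m3 M N X : op3 M (op3 N X) = op3 (M *m N) X. Proof. merge_tac. Qed.
Lemma m4 M N X : op4 M (op4 N X) = op4 (M *m N) X. Proof. merge_tac. Qed.

Lemma sum_id (x : 'I_n) (F : 'I_n -> R) : \sum_(i < n) (1%:M : 'M[R]_n) x i * F i = F x.
Proof.
rewrite (bigD1 x) //= big1 ?addr0; first by rewrite mxE eqxx mul1r.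
by move=> i /negbTE; rewrite mxE eq_sym => ->; rewrite mul0r.
Qed.
Lemma i1 X : op1 1%:M X = X. Proof. by fext; rewrite /op1 sum_id. Qed.
Lemma i2 X : op2 1%:M X = X. Proof. by fext; rewrite /op2 sum_id. Qed.
Lemma i3 X : op3 1%:M X = X. Proof. by fext; rewrite /op3 sum_id. Qed.
Lemma i4 X : op4 1%:M X = X. Proof. by fext; rewrite /op4 sum_id. Qed.

Definition opall M X := op1 M (op2 M (op3 M (op4 M X))).
Lemma opallK M N X : M *m N = 1%:M -> opall M (opall N X) = X.
Proof.
move=> MN; rewrite /opall.
do 6 rewrite ?c21 ?c31 ?c41 ?c32 ?c42 ?c43.
by rewrite m1 m2 m3 m4 MN i1 i2 i3 i4.
Qed.

Definition opF M X : tensor4 R n := fun a b c d =>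
  \sum_(i < n) \sum_(j < n) \sum_(k < n) \sum_(l < n)
    M a i * M b j * M c k * M d l * X i j k l.
Lemma opallF M X : opall M X = opF M X.
Proof.
fext; rewrite /opall /opF /op1 /op2 /op3 /op4; apply eq_bigr => i _.
rewrite big_distrr; apply eq_bigr => j _ /=.
rewrite !big_distrr; apply eq_bigr => k _ /=.
rewrite !big_distrr; apply eq_bigr => l _ /=.
ring.
Qed.

Lemma opF_skew12 M X : (forall x y z w, X x y z w = - X y x z w) ->
  forall a b c d, opF M X a b c d = - opF M X b a c d.
Proof.
move=> H a b c d; rewrite /opF [in RHS]exchange_big -sumrN; apply eq_bigr => i _.
rewrite -sumrN; apply eq_bigr => j _; rewrite -sumrN; apply eq_bigr => k _.
rewrite -sumrN; apply eq_bigr => l _; rewrite H; ring.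
Qed.
Lemma opF_skew34 M X : (forall x y z w, X x y z w = - X x y w z) ->
  forall a b c d, opF M X a b c d = - opF M X a b d c.
Proof.
move=> H a b c d; rewrite /opF -sumrN; apply eq_bigr => i _.
rewrite -sumrN; apply eq_bigr => j _; rewrite [in RHS]exchange_big -sumrN; apply eq_bigr => k _.
rewrite -sumrN; apply eq_bigr => l _; rewrite H; ring.
Qed.
Lemma opF_sym34 M X : (forall x y z w, X x y z w = X x y w z) ->
  forall a b c d, opF M X a b c d = opF M X a b d c.
Proof.
move=> H a b c d; rewrite /opF; apply eq_bigr => i _.
apply eq_bigr => j _; rewrite [in RHS]exchange_big; apply eq_bigr => k _.
apply eq_bigr => l _; rewrite H; ring.
Qed.
Lemma opF_bianchi M X : (forall x y z w, X x y z w + X y z x w + X z x y w = 0) ->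
  forall a b c d, opF M X a b c d + opF M X b c a d + opF M X c a b d = 0.
Proof.
move=> H a b c d.
have e2 : opF M X b c a d = \sum_(i < n) \sum_(j < n) \sum_(k < n) \sum_(l < n)
    M a i * M b j * M c k * M d l * X j k i l.
  rewrite /opF rot3; do 4 (apply eq_bigr => ? _); ring.
have e3 : opF M X c a b d = \sum_(i < n) \sum_(j < n) \sum_(k < n) \sum_(l < n)
    M a i * M b j * M c k * M d l * X k i j l.
  rewrite /opF rot3 rot3; do 4 (apply eq_bigr => ? _); ring.
rewrite e2 e3 /opF -!big_split big1 // => i _.
rewrite -!big_split big1 // => j _.
rewrite -!big_split big1 // => k _.
rewrite -!big_split big1 // => l _.
have e : X k i j l = - X i j k l - X j k i l.
  apply/eqP; rewrite -subr_eq0; apply/eqP; rewrite -(H i j k l); ring.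
rewrite e /=; ring.
Qed.
End S.

Lemma tinnerE {R : realType} {n : nat} (g : 'M[R]_n) T X :
  tinner g T X = \sum_(i < n) \sum_(j < n) \sum_(k < n) \sum_(l < n)
     T i j k l * opF (invmx g) X i j k l.
Proof.
rewrite /tinner /opF /=; do 4 (apply eq_bigr => ? _).
rewrite big_distrr; apply eq_bigr => ? _ /=.
rewrite big_distrr; apply eq_bigr => ? _ /=.
rewrite big_distrr; apply eq_bigr => ? _ /=.
rewrite big_distrr; apply eq_bigr => ? _ /=.
ring.
Qed.

Definition SS {R : realType} {n : nat} (T Y : tensor4 R n) : R :=
  \sum_(i < n) \sum_(j < n) \sum_(k < n) \sum_(l < n) T i j k l * Y i j k l.
Definition Sp {R : realType} {n : nat} (K F : tensor2 R n) : R :=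
  \sum_(i < n) \sum_(j < n) K i j * F i j.

Section C.
Context {R : realType} {n : nat}.
Implicit Types (T Y : tensor4 R n) (K F : tensor2 R n).

Lemma SSD T Y1 Y2 : SS T (fun i j k l => Y1 i j k l + Y2 i j k l) = SS T Y1 + SS T Y2.
Proof.
rewrite /SS -big_split; apply eq_bigr => ? _; rewrite -big_split; apply eq_bigr => ? _.
rewrite -big_split; apply eq_bigr => ? _; rewrite -big_split; apply eq_bigr => ? _ /=; ring.
Qed.
Lemma SSB T Y1 Y2 : SS T (fun i j k l => Y1 i j k l - Y2 i j k l) = SS T Y1 - SS T Y2.
Proof.
rewrite /SS -sumrB; apply eq_bigr => ? _; rewrite -sumrB; apply eq_bigr => ? _.
rewrite -sumrB; apply eq_bigr => ? _; rewrite -sumrB; apply eq_bigr => ? _ /=; ring.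
Qed.
Lemma SSM T c Y : SS T (fun i j k l => c * Y i j k l) = c * SS T Y.
Proof.
rewrite /SS big_distrr; apply eq_bigr => ? _; rewrite big_distrr; apply eq_bigr => ? _.
rewrite big_distrr; apply eq_bigr => ? _; rewrite big_distrr; apply eq_bigr => ? _ /=; ring.
Qed.

Variables (g : 'M[R]_n).
Let G := invmx g.

Lemma Ca T K : SS T (fun i j k l => G i k * K j l) = - Sp K (Ricstar g T).
Proof.
rewrite /SS exchange_big /Sp /Ricstar /Ric /tstar -sumrN; apply eq_bigr => j _.
rewrite (rot3 (fun i k l => T i j k l * (G i k * K j l))) -sumrN; apply eq_bigr => l _.
rewrite big_distrr -sumrN; apply eq_bigr => i _.
rewrite big_distrr -sumrN; apply eq_bigr => k _ /=; rewrite /G; ring.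
Qed.

Lemma Cb T K : in_r T -> SS T (fun i j k l => G j k * K i l) = Sp K (Ricstar g T).
Proof.
move=> [Hs _].
rewrite /SS /Sp /Ricstar /Ric /tstar; apply eq_bigr => i _.
rewrite (rot3 (fun j k l => T i j k l * (G j k * K i l))); apply eq_bigr => l _.
rewrite big_distrr; apply eq_bigr => j _.
rewrite big_distrr; apply eq_bigr => k _ /=; rewrite Hs /G; ring.
Qed.

Lemma Cc T K : SS T (fun i j k l => G i l * K j k) = Sp K (Ric g T).
Proof.
rewrite /SS exchange_big /Sp /Ric; apply eq_bigr => j _.
rewrite exchange_big; apply eq_bigr => k _.
rewrite big_distrr; apply eq_bigr => i _.
rewrite big_distrr; apply eq_bigr => l _ /=; rewrite /G; ring.
Qed.

Lemma Cd T K : in_r T -> SS T (fun i j k l => G j l * K i k) = - Sp K (Ric g T).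
Proof.
move=> [Hs _].
rewrite /SS /Sp /Ric -sumrN; apply eq_bigr => i _.
rewrite exchange_big -sumrN; apply eq_bigr => k _.
rewrite big_distrr -sumrN; apply eq_bigr => j _.
rewrite big_distrr -sumrN; apply eq_bigr => l _ /=; rewrite Hs /G; ring.
Qed.

Lemma Ce T K : in_r T -> SS T (fun i j k l => G k l * K i j) =
   Sp K (fun i j => Ric g T j i - Ric g T i j).
Proof.
move=> [Hs Hb].
rewrite /SS /Sp /Ric; apply eq_bigr => i _; apply eq_bigr => j _.
rewrite -sumrB big_distrr; apply eq_bigr => k _.
rewrite -sumrB big_distrr; apply eq_bigr => l _ /=.
have e : T i j k l = T k j i l - T k i j l.
  have := Hb i j k l; rewrite (Hs j k) => h.
  apply/eqP; rewrite -subr_eq0; apply/eqP; rewrite -h; ring.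
rewrite e /G; ring.
Qed.
End C.

Section M.
Context {R : realType} {n : nat}.
Implicit Types (T Y : tensor4 R n) (K F : tensor2 R n).

Lemma orth_test (g : 'M[R]_n) T Y :
  nondeg_scalar_product g -> orth_a_plus_s g T ->
  (forall x y z w, Y x y z w = - Y y x z w) ->
  (forall x y z w, Y x y z w + Y y z x w + Y z x y w = 0) ->
  ((forall x y z w, Y x y z w = - Y x y w z) \/
   (forall x y z w, Y x y z w = Y x y w z)) ->
  SS T Y = 0.
Proof.
move=> [gs gu] Ho H12 Hb H34.
have HX : opF (invmx g) (opF g Y) = Y.
  by rewrite -!opallF opallK // mulVmx.
have r : in_r (opF g Y).
  by split; [apply: opF_skew12 | apply: opF_bianchi].
have z12 : forall x y z w : 'I_n, (0 : R) = - 0 by move=> *; rewrite oppr0.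
have z3 : forall x y z w : 'I_n, (0 : R) + 0 + 0 = 0 by move=> *; rewrite !addr0.
case: H34 => H34.
- have := Ho (opF g Y) (fun _ _ _ _ => 0) (conj r (opF_skew34 g Y H34))
     (conj (conj z12 z3) (fun _ _ _ _ => erefl)).
  have -> : (fun x y z w => opF g Y x y z w + (fun _ _ _ _ : 'I_n => (0:R)) x y z w)
     = opF g Y by fext; rewrite addr0.
  by rewrite tinnerE HX.
- have := Ho (fun _ _ _ _ => 0) (opF g Y)
     (conj (conj z12 z3) z12) (conj r (opF_sym34 g Y H34)).
  have -> : (fun x y z w => (fun _ _ _ _ : 'I_n => (0:R)) x y z w + opF g Y x y z w)
     = opF g Y by fext; rewrite add0r.
  by rewrite tinnerE HX.
Qed.

Lemma orth_test_a (g : 'M[R]_n) T Y :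
  nondeg_scalar_product g -> orth_a_plus_s g T ->
  (forall x y z w, Y x y z w = - Y y x z w) ->
  (forall x y z w, Y x y z w + Y y z x w + Y z x y w = 0) ->
  (forall x y z w, Y x y z w = - Y x y w z) -> SS T Y = 0.
Proof. by move=> a b c d e; exact: (orth_test g T Y a b c d (or_introl e)). Qed.
Lemma orth_test_s (g : 'M[R]_n) T Y :
  nondeg_scalar_product g -> orth_a_plus_s g T ->
  (forall x y z w, Y x y z w = - Y y x z w) ->
  (forall x y z w, Y x y z w + Y y z x w + Y z x y w = 0) ->
  (forall x y z w, Y x y z w = Y x y w z) -> SS T Y = 0.
Proof. by move=> a b c d e; exact: (orth_test g T Y a b c d (or_intror e)). Qed.

Lemma Sp_delta (x y : 'I_n) F :
  \sum_(i < n) \sum_(j < n) ((i == x) && (j == y))%:R * F i j = F x y.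
Proof.
rewrite (bigD1 x) //= [X in _ + X]big1; last first.
  move=> i /negbTE Hi; apply: big1 => j _; by rewrite Hi mul0r.
rewrite addr0 (bigD1 y) //= [X in _ + X]big1; last first.
  by move=> j /negbTE ->; rewrite andbF mul0r.
by rewrite !eqxx mul1r addr0.
Qed.
End M.

Definition P1 {R : realType} {n : nat} (G : 'M[R]_n) (K : tensor2 R n) : tensor4 R n :=
  fun x y z w => G x z * K y w - G y z * K x w.
Definition P2 {R : realType} {n : nat} (G : 'M[R]_n) (K : tensor2 R n) : tensor4 R n :=
  fun x y z w => G x w * K y z - G y w * K x z.
Definition E4 {R : realType} {n : nat} (G : 'M[R]_n) (K : tensor2 R n) : tensor4 R n :=
  fun x y z w => G z w * K x y.

Section F.
Context {R : realType} {n : nat}.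
Implicit Types (T Y : tensor4 R n) (K F : tensor2 R n).

Lemma SpD K1 K2 F : Sp (fun i j => K1 i j + K2 i j) F = Sp K1 F + Sp K2 F.
Proof.
rewrite /Sp -big_split; apply eq_bigr => ? _; rewrite -big_split; apply eq_bigr => ? _ /=; ring.
Qed.
Lemma SpB K1 K2 F : Sp (fun i j => K1 i j - K2 i j) F = Sp K1 F - Sp K2 F.
Proof.
rewrite /Sp -sumrB; apply eq_bigr => ? _; rewrite -sumrB; apply eq_bigr => ? _ /=; ring.
Qed.
Lemma Spd (x y : 'I_n) F : Sp (fun i j => ((i == x) && (j == y))%:R) F = F x y.
Proof. exact: Sp_delta. Qed.

Lemma Sp_skew K F : (forall a b, K a b = - K b a) ->
  Sp K (fun i j => F j i - F i j) = -2 * Sp K F.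
Proof.
move=> hK; rewrite /Sp.
have -> : \sum_(i < n) \sum_(j < n) K i j * (F j i - F i j) =
   \sum_(i < n) \sum_(j < n) K i j * F j i - \sum_(i < n) \sum_(j < n) K i j * F i j.
  rewrite -sumrB; apply eq_bigr => ? _; rewrite -sumrB; apply eq_bigr => ? _; ring.
rewrite exchange_big /=.
have -> : \sum_(j < n) \sum_(i < n) K i j * F j i = - \sum_(i < n) \sum_(j < n) K i j * F i j.
  rewrite -sumrN; apply eq_bigr => i _; rewrite -sumrN; apply eq_bigr => j _; rewrite hK; ring.
ring.
Qed.

Lemma vP1 (g : 'M[R]_n) T K : in_r T ->
  SS T (P1 (invmx g) K) = - Sp K (Ricstar g T) - Sp K (Ricstar g T).
Proof. by move=> hr; rewrite /P1 SSB Ca Cb. Qed.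
Lemma vP2 (g : 'M[R]_n) T K : in_r T ->
  SS T (P2 (invmx g) K) = Sp K (Ric g T) + Sp K (Ric g T).
Proof. by move=> hr; rewrite /P2 SSB Cc Cd // opprK. Qed.
Lemma vE (g : 'M[R]_n) T K : in_r T -> (forall a b, K a b = - K b a) ->
  SS T (E4 (invmx g) K) = -2 * Sp K (Ric g T).
Proof. by move=> hr hK; rewrite /E4 Ce // Sp_skew. Qed.
End F.

Theorem lemma5p3 (R : realType) (n : nat) (g : 'M[R]_n) (T : tensor4 R n) :
  (3 <= n)%N ->
  nondeg_scalar_product g ->
  in_r T ->
  orth_a_plus_s g T ->
  Ric g T <> (fun _ _ => 0) ->
  (forall x y, Ric g T x y = - Ric g T y x) /\
  (forall x y, 3 * Ric g T x y = Ricstar g T x y).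
Proof.
move=> _ hg hr ho _.
have hG : forall a b, invmx g a b = invmx g b a.
  move=> a b; case: hg => gs _.
  by rewrite -[in RHS]gs -trmx_inv mxE.
set rho := Ric g T; set rhos := Ricstar g T.
have symK : forall K : tensor2 R n, (forall a b, K a b = K b a) ->
    Sp K rho = 0 /\ Sp K rhos = 0.
  move=> K hK.
  have hA := @orth_test_a R n g T (fun x y z w => P1 (invmx g) K x y z w - P2 (invmx g) K x y z w)
    hg ho.
  have hS := @orth_test_s R n g T (fun x y z w => P1 (invmx g) K x y z w + P2 (invmx g) K x y z w)
    hg ho.
  rewrite SSB (vP1 _ _ _ hr) (vP2 _ _ _ hr) in hA.
  rewrite SSD (vP1 _ _ _ hr) (vP2 _ _ _ hr) in hS.
  have e1 := hA (ltac:(move=> x y z w; rewrite /P1 /P2; ring))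
    (ltac:(move=> x y z w; rewrite /P1 /P2 (hG y x) (hG z x) (hG z y)
             (hK z x) (hK y x) (hK z y); ring))
    (ltac:(move=> x y z w; rewrite /P1 /P2; ring)).
  have e2 := hS (ltac:(move=> x y z w; rewrite /P1 /P2; ring))
    (ltac:(move=> x y z w; rewrite /P1 /P2 (hG y x) (hG z x) (hG z y)
             (hK z x) (hK y x) (hK z y); ring))
    (ltac:(move=> x y z w; rewrite /P1 /P2; ring)).
  rewrite -/rho -/rhos in e1 e2.
  split; lra.
have skK : forall K : tensor2 R n, (forall a b, K a b = - K b a) ->
    Sp K rhos = 3 * Sp K rho.
  move=> K hK.
  have hS := @orth_test_s R n g T (fun x y z w =>
     P1 (invmx g) K x y z w + P2 (invmx g) K x y z w - 2 * E4 (invmx g) K x y z w) hg ho.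
  rewrite SSB SSD SSM (vP1 _ _ _ hr) (vP2 _ _ _ hr) (vE _ _ _ hr hK) in hS.
  have e2 := hS (ltac:(move=> x y z w; rewrite /P1 /P2 /E4 (hK y x); ring))
    (ltac:(move=> x y z w; rewrite /P1 /P2 /E4 (hG y x) (hG z x) (hG z y)
             (hK z x) (hK y x) (hK z y); ring))
    (ltac:(move=> x y z w; rewrite /P1 /P2 /E4 (hG w z); ring)).
  rewrite -/rho -/rhos in e2.
  lra.
have key : forall x y, rho x y + rho y x = 0 /\ rhos x y + rhos y x = 0 /\
    rhos x y - rhos y x = 3 * (rho x y - rho y x).
  move=> x y.
  have [a1 a2] := symK (fun i j => ((i == x) && (j == y))%:R + ((i == y) && (j == x))%:R)
    (ltac:(move=> a b /=; rewrite addrC [(b == x) && _]andbC [(b == y) && _]andbC //)).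
  have a3 := skK (fun i j => ((i == x) && (j == y))%:R - ((i == y) && (j == x))%:R)
    (ltac:(move=> a b /=; rewrite [(b == x) && _]andbC [(b == y) && _]andbC; ring)).
  rewrite !SpD !Spd in a1 a2.
  rewrite !SpB !Spd in a3.
  split; first exact: a1.
  split; first exact: a2.
  exact: a3.
split => x y.
- have [h _] := key x y; lra.
- have [h1 [h2 h3]] := key x y; lra.
Qed.
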